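(* Let $\mathbf{P}$ be a poset that has an interval representation in which every interval has length in $[1,2]$ (i.e. $\mathbf{P}\in C(2)$). Then $\dim(\mathbf{P})\le 4$.
   Context: An interval representation of a poset $(X,P)$ assigns to each $x\in X$ a closed real interval $[l_x,r_x]$ such that $x<y$ in $P$ iff $r_x<l_y$; the length is $r_x-l_x$. $C(\alpha)$ denotes the class of posets having an interval representation with all lengths in $[1,\alpha]$. The dimension $\dim(\mathbf{P})$ is the minimum number of linear extensions of $P$ whose intersection is $P$. *)

(* Defs.v *)
From Stdlib Require Import Reals.
From mathcomp Require Import all_boot.

Set Implicit Arguments.
Unset Strict Implicit.
Unset Printing Implicit Defensive.

Definition strict_partial_order (X : Type) (lt : X -> X -> Prop) : Prop :=
  (forall x, ~ lt x x) /\ (forall x y z, lt x y -> lt y z -> lt x z).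

Definition interval_representation (X : Type) (lt : X -> X -> Prop)
    (l r : X -> R) : Prop :=
  (forall x, Rle (l x) (r x)) /\ (forall x y, lt x y <-> Rlt (r x) (l y)).

Definition in_C (alpha : R) (X : Type) (lt : X -> X -> Prop) : Prop :=
  exists l r : X -> R, interval_representation lt l r /\
    (forall x, Rle 1 (Rminus (r x) (l x)) /\ Rle (Rminus (r x) (l x)) alpha).

Definition linear_extension (X : Type) (lt L : X -> X -> Prop) : Prop :=
  strict_partial_order L /\
  (forall x y, x <> y -> L x y \/ L y x) /\
  (forall x y, lt x y -> L x y).

Definition dim_le (X : Type) (lt : X -> X -> Prop) (d : nat) : Prop :=
  exists (k : nat) (L : 'I_k -> X -> X -> Prop),
    (k <= d)%N /\
    (forall i, linear_extension lt (L i)) /\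
    (forall x y, lt x y <-> forall i, L i x y).

(* Main.v *)
Require Import Defs.
From Stdlib Require Import Reals.
From mathcomp Require Import all_boot.
From Stdlib Require Import Lra Lia ZArith Classical.

Section Aux.
Variable X : finType.

Definition lex1 (f : X -> R) (t : X -> X -> Prop) (x y : X) : Prop :=
  Rlt (f x) (f y) \/ (f x = f y /\ t x y).

Lemma lex1_spo f t : strict_partial_order t -> strict_partial_order (lex1 f t).
Proof.
move=> [Hirr Htr]; split.
- move=> x [H|[_ H]]; [lra| exact: (Hirr x H)].
- move=> x y z [H1|[E1 H1]] [H2|[E2 H2]]; rewrite /lex1.
  + left; lra.
  + left; lra.
  + left; lra.
  + right; split; [lra| exact: (Htr _ _ _ H1 H2)].
Qed.

Lemma lex1_tot f t : (forall x y, x <> y -> t x y \/ t y x) ->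
  forall x y, x <> y -> lex1 f t x y \/ lex1 f t y x.
Proof.
move=> Ht x y nxy; rewrite /lex1.
destruct (total_order_T (f x) (f y)) as [[H|H]|H].
- by left; left.
- case: (Ht x y nxy) => H'; [left|right]; right; split => //.
- by right; left.
Qed.

Definition t0 (x y : X) : Prop := ltn (enum_rank x) (enum_rank y).
Definition t1 (x y : X) : Prop := t0 y x.

Lemma t0_spo : strict_partial_order t0.
Proof. split; rewrite /t0. by move=> x /=; rewrite ltnn. move=> x y z; apply: ltn_trans. Qed.
Lemma t1_spo : strict_partial_order t1.
Proof. split; rewrite /t1 /t0. by move=> x /=; rewrite ltnn. move=> x y z H1 H2; apply: ltn_trans H2 H1. Qed.
Lemma t0_tot x y : x <> y -> t0 x y \/ t0 y x.
Proof.
move=> nxy; rewrite /t0.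
case: (ltngtP (enum_rank x) (enum_rank y)) => H; [by left| by right|].
exfalso; apply: nxy; apply: enum_rank_inj; exact: val_inj.
Qed.
Lemma t1_tot x y : x <> y -> t1 x y \/ t1 y x.
Proof. move=> nxy; rewrite /t1; case: (@t0_tot x y nxy); tauto. Qed.

Variables l r : X -> R.
Definition bl (z : X) : Z := Int_part (l z).
Definition pk (i : nat) (z : X) : R :=
  match i with
  | 0 => IZR (bl z)
  | S k => if Z.eqb (Z.modulo (bl z) 3) (Z.of_nat k) then r z else l z
  end.
Definition tb (i : nat) := if i is 0 then t0 else t1.
Definition LL (i : 'I_4) : X -> X -> Prop :=
  lex1 (pk i) (lex1 (fun z => Ropp (l z)) (lex1 (fun z => Ropp (r z)) (tb i))).

Lemma LL_spo i : strict_partial_order (LL i).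
Proof.
apply: lex1_spo; apply: lex1_spo; apply: lex1_spo.
by case: i => [[|k] ?] /=; [exact: t0_spo| exact: t1_spo].
Qed.

Lemma LL_tot i x y : x <> y -> LL i x y \/ LL i y x.
Proof.
apply: lex1_tot; apply: lex1_tot; apply: lex1_tot.
by case: i => [[|k] ?] /=; [exact: t0_tot| exact: t1_tot].
Qed.

Lemma LL_asym i x y : LL i x y -> LL i y x -> False.
Proof.
move=> H1 H2; case: (LL_spo i) => Hirr Htr; exact: (Hirr x (Htr _ _ _ H1 H2)).
Qed.

Hypothesis Hlr : forall x, Rle 1 (r x - l x) /\ Rle (r x - l x) 2.

Lemma pk_in (k : nat) z : Rle (l z) (pk k.+1 z) /\ Rle (pk k.+1 z) (r z).
Proof.
move: (Hlr z) => ?; rewrite /pk; case: Z.eqb; lra.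
Qed.

Lemma LL_ext i x y : Rlt (r x) (l y) -> LL i x y.
Proof.
move=> H; left; case: i => [[|k] Hk] /=.
- have := base_Int_part (l x); have := base_Int_part (l y).
  move: (Hlr x); rewrite /pk /bl => ? ? ?; lra.
- change (Rlt (pk k.+1 x) (pk k.+1 y)); move: (pk_in k x) (pk_in k y) => ? ?; lra.
Qed.

Lemma blP z : Rle (IZR (bl z)) (l z) /\ Rlt (l z) (IZR (bl z) + 1).
Proof. have := base_Int_part (l z); rewrite /bl => ?; lra. Qed.

Lemma pk_R k z : (bl z mod 3 = Z.of_nat k)%Z -> pk k.+1 z = r z.
Proof. by move=> H; rewrite /pk H Z.eqb_refl. Qed.
Lemma pk_L k z : (bl z mod 3 <> Z.of_nat k)%Z -> pk k.+1 z = l z.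
Proof. by move=> H; rewrite /pk; move/Z.eqb_neq: H => ->. Qed.

Lemma mod3_cases (a : Z) :
  (a mod 3 = Z.of_nat 0 \/ a mod 3 = Z.of_nat 1 \/ a mod 3 = Z.of_nat 2)%Z.
Proof. simpl; Z.div_mod_to_equations; lia. Qed.

Lemma exR (a : Z) : exists i : 'I_4, exists k, val i = k.+1 /\ (a mod 3 = Z.of_nat k)%Z.
Proof.
case: (mod3_cases a) => [H|[H|H]].
- by exists (@Ordinal 4 1 isT), 0%N.
- by exists (@Ordinal 4 2 isT), 1%N.
- by exists (@Ordinal 4 3 isT), 2%N.
Qed.
Lemma exL (a : Z) : exists i : 'I_4, exists k, val i = k.+1 /\ (a mod 3 <> Z.of_nat k)%Z.
Proof.
case: (mod3_cases a) => [H|[H|H]].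
- by exists (@Ordinal 4 2 isT), 1%N; split => //; rewrite H.
- by exists (@Ordinal 4 1 isT), 0%N; split => //; rewrite H.
- by exists (@Ordinal 4 1 isT), 0%N; split => //; rewrite H.
Qed.

Lemma LL_rev x y : x <> y -> Rle (l y) (r x) -> Rle (l x) (r y) ->
  exists i, LL i y x.
Proof.
move=> nxy Hyx Hxy.
have [bx1 bx2] := blP x; have [by1 by2] := blP y.
have Lx := Hlr x; have Ly := Hlr y.
case: (Z.lt_trichotomy (bl y) (bl x)) => [Hlt|[Heq|Hgt]].
- exists ord0; left => /=; exact: IZR_lt.
-
  destruct (total_order_T (l x) (l y)) as [[H|H]|H].
  + exists ord0; right; split; first by change (IZR (bl y) = IZR (bl x)); rewrite Heq.
    left; lra.
  + destruct (total_order_T (r x) (r y)) as [[H'|H']|H'].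
    * exists ord0; right; split; first by change (IZR (bl y) = IZR (bl x)); rewrite Heq.
      right; split; first lra. left; lra.
    * case: (@t0_tot x y nxy) => Ht.
      -- exists (@Ordinal 4 1 isT); right; split.
         { change (pk 1 y = pk 1 x); rewrite /pk Heq; case: Z.eqb; lra. }
         right; split; first lra. right; split; first lra. exact: Ht.
      -- exists ord0; right; split; first by change (IZR (bl y) = IZR (bl x)); rewrite Heq.
         right; split; first lra. right; split; first lra. exact: Ht.
    * have [i [k [Hi Hk]]] := exR (bl x).
      have Hk2 : (bl y mod 3 = Z.of_nat k)%Z by rewrite Heq.
      exists i; left; rewrite /LL Hi (@pk_R k x Hk) (@pk_R k y Hk2); lra.
  + have [i [k [Hi Hk]]] := exL (bl x).
    have Hk2 : (bl y mod 3 <> Z.of_nat k)%Z by rewrite Heq.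
    exists i; left; rewrite /LL Hi (@pk_L k x Hk) (@pk_L k y Hk2); lra.
-
  have Hd : (bl y < bl x + 3)%Z.
  { apply: lt_IZR; rewrite plus_IZR; lra. }
  have [i [k [Hi Hk]]] := exR (bl x).
  have Hk' : (bl y mod 3 <> Z.of_nat k)%Z.
  { rewrite -Hk. clear -Hgt Hd. Z.div_mod_to_equations; lia. }
  have Hlxy : Rlt (l x) (l y).
  { have : Rle (IZR (bl x) + 1) (IZR (bl y)).
    { rewrite -plus_IZR; apply: IZR_le; lia. }
    lra. }
  exists i; rewrite /LL /lex1 Hi (@pk_R k x Hk) (@pk_L k y Hk').
  destruct (Rle_lt_or_eq_dec _ _ Hyx) as [H|H].
  + by left.
  + right; split => //; left; lra.
Qed.

End Aux.

Theorem theorem7p2 (X : finType) (lt : X -> X -> Prop) :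
  strict_partial_order lt -> in_C (IZR 2) lt -> dim_le lt 4.
Proof.
move=> Hspo [l [r [[Hle Hrep] Hlen]]].
exists 4%N, (@LL X l r); split => //; split.
- move=> i; split; first exact: LL_spo.
  split; first exact: LL_tot.
  move=> x y /Hrep H; exact: LL_ext.
- move=> x y; split.
  + move=> /Hrep H i; exact: LL_ext.
  + move=> Hall.
    case: (classic (lt x y)) => // Hn; exfalso.
    case: (classic (x = y)) => [E|nxy].
    { subst y; case: (@LL_spo X l r ord0) => Hirr _; exact: (Hirr x (Hall ord0)). }
    case: (classic (lt y x)) => [Hyx|Hnyx].
    { apply: (@LL_asym X l r ord0 x y (Hall ord0)); apply: LL_ext => //; exact/Hrep. }
    have H1 : Rle (l y) (r x).
    { apply: Rnot_lt_le => H; apply: Hn; exact/Hrep. }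
    have H2 : Rle (l x) (r y).
    { apply: Rnot_lt_le => H; apply: Hnyx; exact/Hrep. }
    have [i Hi] := @LL_rev X l r Hlen x y nxy H1 H2.
    exact: (@LL_asym X l r i x y (Hall i) Hi).
Qed.
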